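(* Let $\mathfrak g$ be a symmetrizable Kac–Moody algebra of indefinite type whose generalized Cartan matrix $A$ ($n\times n$) is indecomposable with $\det A\ne0$. For $\gamma\in P^+(\mathfrak g)$, the set $U(\gamma)=\{\lambda\in P^+(\mathfrak g):\lambda-\gamma\in Q^+(\mathfrak g)\}$ is finite.
   Context: $P^+(\mathfrak g)$ is the set of dominant integral weights (nonnegative integer combinations of the fundamental weights $\omega_1,\dots,\omega_n$), and $Q^+(\mathfrak g)$ the set of nonnegative integer combinations of the simple roots. Indefinite type is in the sense of Kac's classification of indecomposable generalized Cartan matrices (neither finite nor affine type). *)

(* Defs.v *)
From HB Require Import structures.
From mathcomp Require Import all_boot all_order all_algebra.
From mathcomp Require Import classical_sets cardinality.
From mathcomp Require Import Rstruct.
Set Implicit Arguments. Unset Strict Implicit. Unset Printing Implicit Defensive.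
Import Order.TTheory GRing.Theory Num.Theory.
Local Open Scope ring_scope.

Definition is_GCM (n : nat) (A : 'M[int]_n) : Prop :=
  (forall i, A i i = 2) /\
  (forall i j, i != j -> A i j <= 0) /\
  (forall i j, A i j = 0 <-> A j i = 0).

Definition symmetrizable (n : nat) (A : 'M[int]_n) : Prop :=
  exists (D B : 'M[rat]_n),
    is_diag_mx D /\ D \in unitmx /\ B^T = B /\ map_mx (fun x : int => x%:~R) A = D *m B.

Definition indecomposable (n : nat) (A : 'M[int]_n) : Prop :=
  (0 < n)%N /\
  ~ (exists S : {set 'I_n}, [/\ S != finset.set0, S != [set: 'I_n] &
        forall i j, i \in S -> j \notin S -> A i j = 0]).

Definition Areal (n : nat) (A : 'M[int]_n) : 'M[Rdefinitions.R]_n :=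
  map_mx (fun x : int => x%:~R) A.
Definition vpos (n : nat) (v : 'cV[Rdefinitions.R]_n) : Prop := forall i, 0 < v i 0%R.
Definition vnneg (n : nat) (v : 'cV[Rdefinitions.R]_n) : Prop := forall i, 0 <= v i 0%R.

(* Kac, Theorem 4.3: (Fin) and (Aff). *)
Definition finite_type (n : nat) (A : 'M[int]_n) : Prop :=
  [/\ \det A != 0,
      (exists u : 'cV[Rdefinitions.R]_n, vpos u /\ vpos (Areal A *m u)) &
      (forall v : 'cV[Rdefinitions.R]_n, vnneg (Areal A *m v) -> vpos v \/ v = 0)].

Definition affine_type (n : nat) (A : 'M[int]_n) : Prop :=
  [/\ \rank (Areal A) = n.-1,
      (exists u : 'cV[Rdefinitions.R]_n, vpos u /\ Areal A *m u = 0) &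
      (forall v : 'cV[Rdefinitions.R]_n, vnneg (Areal A *m v) -> Areal A *m v = 0)].

Definition indefinite_type (n : nat) (A : 'M[int]_n) : Prop :=
  ~ finite_type A /\ ~ affine_type A.

(* Weights are written in the basis of fundamental weights omega_1..omega_n:
   lambda = sum_i lam i * omega_i, with lam : 'cV[int]_n.  Since
   alpha_j(alpha_i^vee) = a_ij, the simple root alpha_j has coordinates the
   j-th column of A. *)
Definition dominant (n : nat) (lam : 'cV[int]_n) : Prop := forall i, 0 <= lam i 0%R.

Definition in_Qplus (n : nat) (A : 'M[int]_n) (mu : 'cV[int]_n) : Prop :=
  exists k : 'cV[int]_n, (forall j, 0 <= k j 0%R) /\ mu = A *m k.

Definition U_set (n : nat) (A : 'M[int]_n) (gam : 'cV[int]_n) : set 'cV[int]_n :=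
  [set lam | dominant lam /\ in_Qplus A (lam - gam)].

(* Main.v *)
Require Import Defs.
From HB Require Import structures.
From mathcomp Require Import all_boot all_order all_algebra.
From mathcomp Require Import classical_sets cardinality.
From mathcomp Require Import Rstruct.
From mathcomp Require Import ring lra.
Set Implicit Arguments. Unset Strict Implicit. Unset Printing Implicit Defensive.
Import Order.TTheory GRing.Theory Num.Theory.
Local Open Scope ring_scope.

Section Ville.
Variable F : realFieldType.

Lemma foldr_max_spec (x0 : F) (s : seq F) :
  let m := foldr Num.max x0 s in
  [/\ x0 <= m, (forall x, x \in s -> x <= m) & (m = x0 \/ m \in s)].
Proof.
elim: s => [|a s [IH1 IH2 IH3]] /=; first by split => //; left.
split.
- by rewrite le_max IH1 orbT.
- move=> x; rewrite inE => /orP[/eqP ->|xs]; first by rewrite le_max lexx.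
  by rewrite le_max IH2 ?orbT.
- case: (leP a (foldr Num.max x0 s)) => h.
  + case: IH3 => [->|hm]; [by left| by right; rewrite inE hm orbT].
  + right; by rewrite inE eqxx.
Qed.

Lemma between (ls hs : seq F) :
  (forall l h, l \in ls -> h \in hs -> l < h) -> (forall h, h \in hs -> 0 < h) ->
  exists s, [/\ 0 <= s, forall l, l \in ls -> l < s & forall h, h \in hs -> s < h].
Proof.
move=> Hlh Hh.
have [lo0 loge lomem] := foldr_max_spec 0 ls.
set lo := foldr _ _ _ in lo0 loge lomem.
have lolt : forall h, h \in hs -> lo < h.
  move=> h hh; case: lomem => [->|lm]; [exact: Hh| exact: Hlh].
case: hs Hlh Hh lolt => [|h0 hs] Hlh Hh lolt.
  exists (lo + 1); split => //; first lra.
  move=> l /loge; lra.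
have [m0 mge mmem] := foldr_max_spec (- h0) [seq - h | h <- hs].
set m := foldr _ _ _ in m0 mge mmem.
have hile : forall h, h \in h0 :: hs -> - m <= h.
  move=> h; rewrite inE => /orP[/eqP ->|hh]; first lra.
  have := mge (- h) (map_f _ hh); lra.
have himem : - m \in h0 :: hs.
  case: mmem => [->|/mapP[h hh ->]]; rewrite opprK inE ?eqxx //.
  by rewrite hh orbT.
have := lolt _ himem => lt.
exists ((lo + - m) / 2); split.
- lra.
- move=> l /loge; lra.
- move=> h /hile; lra.
Qed.

Lemma sum_ind (J : finType) (Q : {set J}) (f : J -> F) j :
  j \in Q -> \sum_(l in Q) f l * (l == j)%:R = f j.
Proof.
move=> jQ; rewrite (bigD1 j) //= eqxx mulr1 big1 ?addr0 //.
by move=> l /andP[_ /negbTE ->]; rewrite mulr0.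
Qed.

Lemma ville (I : finType) (k : nat) : forall (J : finType) (P : {set I}) (Q : {set J})
  (M : I -> J -> F), #|P| = k ->
  (exists y : J -> F, [/\ forall j, j \in Q -> 0 <= y j, exists2 j, j \in Q & 0 < y j
       & forall i, i \in P -> 0 <= \sum_(j in Q) M i j * y j])
  \/ (exists u : I -> F, (forall i, i \in P -> 0 <= u i) /\
         forall j, j \in Q -> \sum_(i in P) u i * M i j < 0).
Proof.
elim: k => [|k IH] J P Q M hP.
  have P0 : P = finset.set0 by apply/eqP; rewrite -cards_eq0 hP.
  case: (set_0Vmem Q) => [->|[j0 j0Q]].
    by right; exists (fun _ => 0); split => // j; rewrite inE.
  left; exists (fun _ => 1); split => //.
  - by exists j0.
  - by move=> i; rewrite P0 inE.
have [i0 i0P] : exists i0, i0 \in P.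
  by apply/set0Pn; rewrite -card_gt0 hP.
set P' := P :\ i0.
have hP' : #|P'| = k by move: hP; rewrite (cardsD1 i0) i0P add1n => -[].
pose r j := M i0 j.
pose G := (J * J)%type.
pose Q' : {set G} := [set p | [&& p.1 \in Q, p.2 \in Q &
   ((p.1 == p.2) && (0 <= r p.1)) || ((0 < r p.1) && (r p.2 < 0))]].
pose gen (p : G) (l : J) : F := if p.1 == p.2 then (l == p.1)%:R
   else r p.1 * (l == p.2)%:R - r p.2 * (l == p.1)%:R.
pose M' i (p : G) := \sum_(l in Q) M i l * gen p l.
have key : forall (f : J -> F) p, p \in Q' ->
  \sum_(l in Q) f l * gen p l = if p.1 == p.2 then f p.1 else r p.1 * f p.2 - r p.2 * f p.1.
  move=> f p; rewrite inE => /and3P[p1Q p2Q _]; rewrite /gen.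
  case: eqP => _; first exact: sum_ind.
  under eq_bigr do rewrite mulrBr mulrCA [f _ * (r p.2 * _)]mulrCA.
  by rewrite sumrB -!mulr_sumr !sum_ind.
have genpos : forall p l, p \in Q' -> 0 <= gen p l.
  move=> p l; rewrite inE => /and3P[_ _]; rewrite /gen.
  case: eqP => _ /=; first by rewrite ler0n.
  move=> /andP[r1 r2]; rewrite subr_ge0.
  apply: (@le_trans _ _ 0); last by rewrite mulr_ge0 ?ler0n ?ltW.
  by rewrite mulr_le0_ge0 ?ler0n // ltW.
have exch : forall (f : J -> F) (y : G -> F),
   \sum_(l in Q) f l * (\sum_(p in Q') gen p l * y p)
   = \sum_(p in Q') (\sum_(l in Q) f l * gen p l) * y p.
  move=> f y; under eq_bigr do rewrite mulr_sumr.
  rewrite exchange_big /=; apply: eq_bigr => p _.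
  by rewrite mulr_suml; apply: eq_bigr => l _; rewrite mulrA.
case: (IH G P' Q' M' hP') => [[y [ypos [p0 p0Q' p0pos] yM]]|[u [upos uM]]].
- left; exists (fun l => \sum_(p in Q') gen p l * y p); split.
  + by move=> j _; apply: sumr_ge0 => p pQ; rewrite mulr_ge0 ?genpos ?ypos.
  + exists p0.2; first by move: p0Q'; rewrite inE => /and3P[].
    rewrite (bigD1 p0) //=.
    have : 0 < gen p0 p0.2.
      move: p0Q'; rewrite inE /gen => /and3P[_ _].
      case: eqP => [<- _|/eqP ne]; first by rewrite eqxx ltr01.
      rewrite eqxx eq_sym (negbTE ne) mulr1 mulr0 subr0 /=.
      by case/andP.
    have : 0 <= \sum_(i | (i \in Q') && (i != p0)) gen i p0.2 * y i.
      by apply: sumr_ge0 => p /andP[pQ _]; rewrite mulr_ge0 ?genpos ?ypos.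
    move=> h1 h2; have := mulr_gt0 h2 p0pos; lra.
  + move=> i iP; rewrite exch.
    case: (eqVneq i i0) => [->|ne].
    * apply: sumr_ge0 => p pQ; rewrite key //; apply: mulr_ge0; last exact: ypos.
      move: pQ; rewrite inE => /and3P[_ _]; case: eqP => _ /=.
      - by case/orP => [//|/andP[/ltW //]].
      - by rewrite /r mulrC subrr.
    * by apply: yM; rewrite /P' in_setD1 ne.
- pose a l := \sum_(i in P') u i * M i l.
  have aeq : forall p, p \in Q' -> \sum_(i in P') u i * M' i p =
      if p.1 == p.2 then a p.1 else r p.1 * a p.2 - r p.2 * a p.1.
    move=> p pQ; rewrite -key //.
    under eq_bigr do rewrite mulr_sumr.
    rewrite exchange_big /=; apply: eq_bigr => l _.
    by rewrite /a mulr_suml; apply: eq_bigr => i _; rewrite mulrA.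
  have F1 : forall j, j \in Q -> 0 <= r j -> a j < 0.
    move=> j jQ rj; have pQ : (j, j) \in Q' by rewrite inE /= jQ eqxx rj.
    by have := uM _ pQ; rewrite aeq //= eqxx.
  have F2 : forall j l, j \in Q -> l \in Q -> 0 < r j -> r l < 0 -> r j * a l - r l * a j < 0.
    move=> j l jQ lQ rj rl.
    have pQ : (j, l) \in Q' by rewrite inE /= jQ lQ rj rl orbT.
    have ne : j != l by apply/eqP => e; move: rl; rewrite -e; lra.
    by have := uM _ pQ; rewrite aeq //= (negbTE ne).
  set Ls := [seq a l / (- r l) | l <- enum Q & r l < 0].
  set Hs := [seq - a j / r j | j <- enum Q & 0 < r j].
  have Hlh : forall x z, x \in Ls -> z \in Hs -> x < z.
    move=> x z /mapP[l]; rewrite mem_filter mem_enum => /andP[rl lQ] ->.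
    move=> /mapP[j]; rewrite mem_filter mem_enum => /andP[rj jQ] ->.
    have := F2 _ _ jQ lQ rj rl.
    have hl : 0 < - r l by lra.
    have rj0 : r j != 0 by rewrite (gt_eqF rj).
    have rl0 : - r l != 0 by rewrite (gt_eqF hl).
    have e1 := divfK rl0 (a l); have e2 := divfK rj0 (- a j).
    move: e1 e2; set xx := a l / - r l; set zz := - a j / r j => e1 e2 h.
    have hp : 0 < r j * (- r l) by apply: mulr_gt0.
    rewrite -subr_gt0 -(pmulr_rgt0 _ hp).
    have -> : r j * - r l * (zz - xx) = - (r j * (xx * - r l) - r l * (- (zz * r j))) by ring.
    rewrite e1 e2 opprK; lra.
  have Hh : forall z, z \in Hs -> 0 < z.
    move=> z /mapP[j]; rewrite mem_filter mem_enum => /andP[rj jQ] ->.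
    have := F1 _ jQ (ltW rj) => h; rewrite divr_gt0 //; lra.
  have [s [s0 sl sh]] := between Hlh Hh.
  right; exists (fun i => if i == i0 then s else u i); split.
    move=> i iP; case: eqP => // /eqP ne; apply: upos; by rewrite in_setD1 ne.
  move=> j jQ; rewrite (bigD1 i0) //= eqxx.
  have -> : \sum_(i in P | i != i0) (if i == i0 then s else u i) * M i j = a j.
    rewrite /a; apply: eq_big => [i|i]; first by rewrite in_setD1 andbC.
    by move=> /andP[_ /negbTE ->].
  have -> : M i0 j = r j by [].
  case: (ltrgt0P (r j)) => rj.
  + have hm : - a j / r j \in Hs.
      by apply/mapP; exists j; rewrite // mem_filter mem_enum rj jQ.
    have h := sh _ hm.
    have rj0 : r j != 0 by rewrite (gt_eqF rj).
    have e := divfK rj0 (- a j).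
    move: h e; set zz := - a j / r j => h e; nra.
  + have hm : a j / - r j \in Ls.
      by apply/mapP; exists j; rewrite // mem_filter mem_enum rj jQ.
    have h := sl _ hm.
    have rj0 : - r j != 0 by rewrite oppr_eq0 (lt_eqF rj).
    have e := divfK rj0 (a j).
    move: h e; set zz := a j / - r j => h e; nra.
  + have := F1 _ jQ; rewrite rj lexx mulr0 add0r; by apply.
Qed.
End Ville.

Notation RR := Rdefinitions.R.

Lemma Areal_mul (n : nat) (A : 'M[int]_n) (v : 'cV[RR]_n) i :
  (Areal A *m v) i 0 = \sum_j (A i j)%:~R * v j 0.
Proof. by rewrite mxE; apply: eq_bigr => j _; rewrite mxE. Qed.

Lemma sumT (T : finType) (f : T -> RR) : \sum_(i in (finset.setT : {set T})) f i = \sum_i f i.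
Proof. by apply: eq_bigl => i; rewrite inE. Qed.

Lemma L1 (n : nat) (A : 'M[int]_n) : is_GCM A -> indecomposable A ->
  forall w : 'cV[RR]_n, vnneg w -> vnneg (Areal A *m w) -> vpos w \/ w = 0.
Proof.
move=> [Hd [Hoff _]] [_ Hind] w w0 Aw0.
case: (boolP ([set i | w i 0 == 0] == finset.set0)) => [/eqP S0|S0].
  left => i; rewrite lt_def w0 andbT; apply/negP => /eqP wi.
  have : i \in [set i | w i 0 == 0] by rewrite inE wi.
  by rewrite S0 inE.
case: (boolP ([set i | w i 0 == 0] == (finset.setT : {set 'I_n}))) => [/eqP ST|ST].
  right; apply/matrixP => i j; rewrite (ord1 j) mxE.
  have : i \in (finset.setT : {set 'I_n}) by rewrite inE.
  by rewrite -ST inE => /eqP.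
exfalso; apply: Hind; exists [set i | w i 0 == 0]; split => // i j.
rewrite !inE => /eqP wi wj.
have hs := Aw0 i; rewrite Areal_mul in hs.
have hle : forall l, 0 <= - ((A i l)%:~R * w l 0).
  move=> l; case: (eqVneq l i) => [->|ne]; first by rewrite wi mulr0 oppr0.
  rewrite -mulNr mulr_ge0 // oppr_ge0 lerz0; apply: Hoff; by rewrite eq_sym.
have hsum : \sum_l - ((A i l)%:~R * w l 0) = 0 :> RR.
  apply/eqP; rewrite eq_le sumr_ge0 ?andbT; last by move=> l _; apply: hle.
  by rewrite sumrN oppr_le0.
have := psumr_eq0P (fun l _ => hle l) hsum (i:=j) isT => /eqP.
rewrite oppr_eq0 mulf_eq0 (negbTE wj) orbF intr_eq0 => /eqP; exact.
Qed.

Theorem proposition5p3 (n : nat) (A : 'M[int]_n) :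
  is_GCM A -> symmetrizable A -> indecomposable A -> indefinite_type A ->
  \det A != 0 ->
  forall gam : 'cV[int]_n, dominant gam -> finite_set (U_set A gam).
Proof.
move=> HG _ HI Hindef detA gam gam0.
have detR : \det (Areal A) != 0.
  by rewrite /Areal det_map_mx intr_eq0.
have unitAr : Areal A \in unitmx by rewrite unitmxE unitfE.
have inj : forall v : 'cV[RR]_n, Areal A *m v = 0 -> v = 0.
  by move=> v h; rewrite -(mulKmx unitAr v) h mulmx0.
have [n0 _] := HI.
have hv := @ville RR 'I_n #|(finset.setT : {set 'I_n})| 'I_n (finset.setT : {set 'I_n}) (finset.setT : {set 'I_n})
   (fun i j => (A i j)%:~R) erefl.
case: hv => [[y [ypos [j0 _ yj0] yA]] | [u [upos uA]]].
- exfalso; apply: (proj1 Hindef).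
  pose yv : 'cV[RR]_n := \col_j y j.
  have yvnn : vnneg yv by move=> i; rewrite mxE ypos ?finset.in_setT.
  have Ayv : vnneg (Areal A *m yv).
    move=> i; rewrite Areal_mul; have := yA i (finset.in_setT i); rewrite sumT.
    by under [X in _ -> _ <= X]eq_bigr do rewrite mxE.
  have yv0 : yv != 0.
    apply/eqP => h; move: yj0; have -> : y j0 = yv j0 0 by rewrite mxE.
    by rewrite h mxE ltxx.
  have yvpos : vpos yv.
    by case: (L1 HG HI yvnn Ayv) => [//|hh0]; move: yv0; rewrite hh0 eqxx.
  have Ayv0 : Areal A *m yv != 0.
    by apply/eqP => /inj h; move: yv0; rewrite h eqxx.
  have Hc : forall v, vnneg (Areal A *m v) -> vpos v \/ v = 0.
    move=> v Av.
    case: (boolP [forall i, 0 <= v i 0]) => [/forallP vn | /forallPn [i0 vi0]].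
      exact: (L1 HG HI vn Av).
    rewrite -ltNge in vi0.
    pose f i := - v i 0 / yv i 0.
    have [im _ ismax] := @arg_maxP _ _ _ i0 predT f isT.
    set t := f im.
    have fi0 : 0 < f i0 by rewrite /f divr_gt0 ?yvpos //; lra.
    have tpos : 0 < t.
      have h : f i0 <= f im := ismax i0 isT. rewrite /t; lra.
    pose w := v + t *: yv.
    have wnn : vnneg w.
      move=> i; rewrite !mxE.
      have : f i <= f im := ismax i isT; rewrite /t /f.
      have yi := yvpos i.
      have e := divfK (lt0r_neq0 yi) (- v i 0).
      move: e; set q := - v i 0 / yv i 0 => e h.
      have : q * yv i 0 <= (- v im 0 / yv im 0) * yv i 0 by rewrite ler_wpM2r // ltW.
      have eyi : yv i 0 = y i by rewrite mxE.
      rewrite -eyi; lra.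
    have wis : w im 0 = 0.
      have eyi : yv im 0 = y im by rewrite mxE.
      rewrite !mxE /t /f -eyi divfK ?lt0r_neq0 ?yvpos //; lra.
    have Aw : vnneg (Areal A *m w).
      move=> i; have h1 := Av i; have h2 := Ayv i; have h3 := mulr_ge0 (ltW tpos) (Ayv i).
      rewrite mulmxDr -scalemxAr !mxE; rewrite !mxE in h1 h2 h3; lra.
    case: (L1 HG HI wnn Aw) => [wp|w0].
      by have := wp im; rewrite wis ltxx.
    exfalso; move/eqP: Ayv0; apply; apply/matrixP => i j; rewrite (ord1 j) [RHS]mxE.
    have ev : v = - (t *: yv) by apply/eqP; rewrite -subr_eq0 opprK -/w w0.
    have h2 := Av i; have h1 := Ayv i; rewrite ev mulmxN -scalemxAr in h2.
    move: h1 h2; set X := Areal A *m yv; rewrite !mxE => h1 h2.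
    apply/eqP; rewrite eq_le h1 andbT.
    have := mulr_gt0 tpos; nra.
  split => //.
  + pose one : 'cV[RR]_n := const_mx 1.
    exists (invmx (Areal A) *m one).
    rewrite mulKVmx //; split; last by move=> i; rewrite mxE ltr01.
    case: (Hc (invmx (Areal A) *m one)) => //.
      by rewrite mulKVmx // => i; rewrite mxE ler01.
    move=> h; have := congr1 (mulmx (Areal A)) h; rewrite mulKVmx // mulmx0.
    move/matrixP => /(_ (Ordinal n0) 0); rewrite !mxE => /eqP; by rewrite oner_eq0.
-
  have [c ceq] : exists c : 'I_n -> RR, forall j, c j = \sum_i u i * (A i j)%:~R.
    by exists (fun j => \sum_i u i * (A i j)%:~R).
  have cneg : forall j, c j < 0.
    by move=> j; have := uA j (finset.in_setT j); rewrite sumT ceq.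
  have upos' : forall i, 0 <= u i by move=> i; apply: upos; rewrite finset.in_setT.
  pose Ug := \sum_i u i * (gam i 0)%:~R : RR.
  have Ug0 : 0 <= Ug.
    by apply: sumr_ge0 => i _; rewrite mulr_ge0 // ler0z.
  pose Bd := \sum_j Ug / (- c j).
  have Bd0 : forall j, Ug / (- c j) <= Bd.
    move=> j; rewrite /Bd (bigD1 j) //= lerDl; apply: sumr_ge0 => l _.
    by rewrite divr_ge0 // oppr_ge0 ltW.
  pose N := Num.Def.archi_bound Bd.
  have BdN : Bd < N%:R.
    apply: archi_boundP; have := Bd0 (Ordinal n0).
    have : 0 <= Ug / - c (Ordinal n0) by rewrite divr_ge0 // oppr_ge0 ltW.
    lra.
  pose f (g : {ffun 'I_n -> 'I_N}) : 'cV[int]_n := gam + A *m \col_j ((g j : nat)%:Z).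
  apply: (@sub_finite_set _ _ [set f g | g in [set: {ffun 'I_n -> 'I_N}]]); last first.
    exact: finite_image.
  move=> lam [lam0 [k [k0 hk]]].
  have hl : forall i, (lam i 0)%:~R = (gam i 0)%:~R + \sum_j (A i j)%:~R * (k j 0)%:~R :> RR.
    move=> i; have := congr1 (fun X : 'cV[int]_n => X i 0) hk; rewrite !mxE => e.
    have -> : lam i 0 = gam i 0 + \sum_j A i j * k j 0 by rewrite -e; ring.
    rewrite intrD rmorph_sum; congr (_ + _).
    by apply: eq_bigr => j _; rewrite -intrM.
  have S0 : 0 <= \sum_i u i * (lam i 0)%:~R :> RR.
    by apply: sumr_ge0 => i _; rewrite mulr_ge0 // ler0z.
  have Seq : \sum_i u i * (lam i 0)%:~R = Ug + \sum_j c j * (k j 0)%:~R :> RR.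
    under eq_bigr do rewrite hl mulrDr.
    rewrite big_split /=; congr (_ + _).
    under eq_bigr do rewrite mulr_sumr.
    rewrite exchange_big /=; apply: eq_bigr => j _.
    by rewrite ceq mulr_suml; apply: eq_bigr => i _; rewrite mulrA.
  have kbound : forall j, (k j 0)%:~R < N%:R :> RR.
    move=> j.
    have kj0 : forall l, 0 <= (k l 0)%:~R :> RR by move=> l; rewrite ler0z.
    have h1 : - c j * (k j 0)%:~R <= - \sum_l c l * (k l 0)%:~R.
      rewrite -sumrN (bigD1 j) //= -mulNr lerDl; apply: sumr_ge0 => l _.
      by rewrite -mulNr mulr_ge0 // oppr_ge0 ltW.
    have cj := cneg j; have cj0 : - c j != 0 by rewrite oppr_eq0 (lt_eqF cj).
    have e := divfK cj0 Ug.
    have := Bd0 j; move: e; set q := Ug / - c j => e hq.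
    suff : (k j 0)%:~R <= q by lra.
    have hc : 0 < - c j by lra.
    rewrite -(ler_pM2r hc) e; lra.
  have hb : forall j, (absz (k j 0%R) < N)%N.
    move=> j; have e : (k j 0%R)%:~R = ((absz (k j 0%R))%:R : RR) by rewrite natr_absz ger0_norm ?k0.
    by have := kbound j; rewrite e ltr_nat.
  exists [ffun j => Ordinal (hb j)]; first by [].
  rewrite /f; apply/matrixP => i j; rewrite (ord1 j).
  have -> : \col_j0 (([ffun j => Ordinal (hb j)] j0 : nat)%:Z) = k.
    apply/matrixP => a b; rewrite (ord1 b) !mxE ffunE /=.
    by rewrite gez0_abs ?k0.
  by rewrite -hk addrC subrK.
Qed.
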